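(* Let $H$ be a traceless hermitian $5\times 5$ matrix with pairwise distinct eigenvalues $\lambda_1,\dots,\lambda_5$, let $C(z)=\prod_{k=1}^5(z-\lambda_k)$, and let $F_5(t)=\sum_{k=1}^5 \exp(i\lambda_k t)/C'(\lambda_k)$. Then for all real $t$, $$\exp(itH)=\Big[H^4-iH^3\frac{d}{dt}-H^2\Big(\tfrac12\operatorname{tr}(H^2)+\frac{d^2}{dt^2}\Big)+H\Big(-\tfrac13\operatorname{tr}(H^3)+\tfrac12 i\operatorname{tr}(H^2)\frac{d}{dt}+i\frac{d^3}{dt^3}\Big)$$ $$+I\Big(\tfrac18(\operatorname{tr}(H^2))^2-\tfrac14\operatorname{tr}(H^4)+\tfrac13\operatorname{tr}(H^3)\,i\frac{d}{dt}+\tfrac12\operatorname{tr}(H^2)\frac{d^2}{dt^2}+\frac{d^4}{dt^4}\Big)\Big]F_5(t).$$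
   Context: $I$ is the $5\times5$ identity matrix; a matrix coefficient multiplying a differential operator means the operator is applied to $F_5(t)$ and the result multiplies the matrix. *)

(* Defs.v *)
From HB Require Import structures.
From mathcomp Require Import all_boot all_order all_algebra.
From mathcomp Require Import all_classical all_reals all_analysis.
From mathcomp Require Import complex.
Set Implicit Arguments. Unset Strict Implicit. Unset Printing Implicit Defensive.
Import Order.TTheory GRing.Theory Num.Theory.
Import numFieldNormedType.Exports.
Local Open Scope ring_scope.
Local Open Scope complex_scope.
Local Open Scope classical_set_scope.

(* the complex numbers R[i], packaged as a numClosedFieldType so that the
   generic topology/normed structure of MathComp-Analysis applies *)
Definition Cpx (R : realType) : numClosedFieldType := R[i].

Definition cexp (R : realType) (z : Cpx R) : Cpx R :=
  lim ((fun N : nat => \sum_(k < N) (k`!%:R)^-1 * z ^+ k) @ \oo).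

Definition expm (R : realType) (n : nat) (M : 'M[Cpx R]_n.+1) : 'M[Cpx R]_n.+1 :=
  \matrix_(a, b) lim ((fun N : nat => (\sum_(k < N) (k`!%:R)^-1 *: M ^+ k) a b) @ \oo).

Definition cderiv (R : realType) (f : R -> Cpx R) : R -> Cpx R :=
  fun t => lim ((fun h : R => (f (t + h) - f t) / (h%:C : Cpx R)) @ 0^').

Definition cderivn (R : realType) (n : nat) (f : R -> Cpx R) : R -> Cpx R :=
  iter n (@cderiv R) f.

Definition hermitian_mx (R : realType) (n : nat) (H : 'M[Cpx R]_n) : Prop :=
  forall a b, H b a = (H a b)^*.

Definition charC (R : realType) (lam : 'I_5 -> Cpx R) : {poly Cpx R} :=
  \prod_(k < 5) ('X - (lam k)%:P).

Definition F5 (R : realType) (lam : 'I_5 -> Cpx R) (t : R) : Cpx R :=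
  \sum_(k < 5) cexp ('i * lam k * t%:C) / ((charC lam)^`()).[lam k].

(* Main.v *)
Require Import Defs.
From HB Require Import structures.
From mathcomp Require Import all_boot all_order all_algebra.
From mathcomp Require Import all_classical all_reals all_analysis.
From mathcomp Require Import complex.
From mathcomp Require Import ring.
Import Order.TTheory GRing.Theory Num.Theory.
Import numFieldNormedType.Exports.
Local Open Scope ring_scope.
Local Open Scope complex_scope.
Local Open Scope classical_set_scope.
Notation cRe := complex.Re.
Notation cIm := complex.Im.
Lemma sqrt_le_abs (R : realType) (a b : R) :
  Num.sqrt (a ^+ 2 + b ^+ 2) <= `|a| + `|b|.
Proof.
have h : 0 <= `|a| + `|b| by rewrite addr_ge0.
have e : Num.sqrt ((`|a| + `|b|) ^+ 2) = `|a| + `|b|.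
  by rewrite sqrtr_sqr ger0_norm.
rewrite -[X in _ <= X]e ler_sqrt ?sqr_ge0 //.
rewrite sqrrD !real_normK ?num_real // -addrA lerD2l lerDr.
by rewrite mulrn_wge0 // mulr_ge0.
Qed.

Lemma cvgC_ReIm (R : realType) (T : Type) (F : set_system T) (FF : Filter F)
  (f : T -> Cpx R) (l : Cpx R) :
  (fun x => cRe (f x)) @ F --> cRe l -> (fun x => cIm (f x)) @ F --> cIm l ->
  f @ F --> l.
Proof.
move=> /cvgrPdist_lt hre /cvgrPdist_lt him; apply/cvgrPdist_lt => e e0.
have : (0 : Cpx R) < e := e0.
rewrite ltcE => /andP[/eqP ie re].
have r2 : 0 < cRe e / 2 by rewrite divr_gt0.
move: (hre _ r2) (him _ r2) => h1 h2.
have -> : e = (cRe e)%:C by case: e {e0 h1 h2 r2 re} ie => a b /= ->.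
near=> x.
rewrite normc_def ltcR /=.
apply: le_lt_trans; first exact: sqrt_le_abs.
rewrite (splitr (cRe e)) ltrD //.
  rewrite raddfB /=; near: x; exact: h1.
rewrite raddfB /=; near: x; exact: h2.
Unshelve. all: end_near. Qed.

Lemma iy_pow (R : realType) (y : R) k :
  ('i * y%:C : Cpx R) ^+ k =
  ((~~ odd k)%:R * (-1) ^+ k./2 * y ^+ k) +i* ((odd k)%:R * (-1) ^+ k.-1./2 * y ^+ k).
Proof.
elim: k => [|k IH].
  by rewrite expr0; apply/eqP; rewrite eq_complex /= !mul1r !mul0r !eqxx.
rewrite exprS IH.
have -> : ('i * y%:C : Cpx R) = ((0 : R) +i* y).
  by apply/eqP; rewrite eq_complex /= !mul0r !mul1r subr0 add0r !eqxx.
simpc.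
apply/eqP; rewrite eq_complex /=; apply/andP; split; apply/eqP.
  rewrite negbK; case: k {IH} => [|k] /=; first by rewrite !mul0r !mulr0 oppr0.
  case: (odd k) => /=; rewrite ?mul0r ?mul1r ?mulr0 ?oppr0 //.
  by rewrite [(-1) ^+ _.+1]exprS [y ^+ _.+2]exprS; ring.
by rewrite exprS; ring.
Qed.

Lemma iy_term (R : realType) (y : R) k :
  (k`!%:R : Cpx R)^-1 * ('i * y%:C) ^+ k = (cos_coeff y k) +i* (sin_coeff y k).
Proof.
rewrite iy_pow.
have -> : (k`!%:R : Cpx R)^-1 = ((k`!%:R : R)^-1)%:C by rewrite fmorphV rmorph_nat.
simpc; apply/eqP; rewrite eq_complex /=.
rewrite /cos_coeff /sin_coeff /=.
rewrite -?exprnP.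
by apply/andP; split; apply/eqP; rewrite mulrC.
Qed.

Lemma cvg_cexp_iy (R : realType) (y : R) :
  (fun N : nat => \sum_(k < N) (k`!%:R : Cpx R)^-1 * ('i * y%:C) ^+ k) @ \oo
    --> ((cos y +i* sin y) : Cpx R).
Proof.
apply: cvgC_ReIm => /=.
  have -> : (fun x : nat => cRe (\sum_(k < x) (k`!%:R : Cpx R)^-1 * ('i * y%:C) ^+ k))
      = series (cos_coeff y).
    apply/funext => N; rewrite /series /= big_mkord raddf_sum /=.
    by apply: eq_bigr => k _; rewrite iy_term.
  rewrite unlock; exact: is_cvg_series_cos_coeff.
have -> : (fun x : nat => cIm (\sum_(k < x) (k`!%:R : Cpx R)^-1 * ('i * y%:C) ^+ k))
    = series (sin_coeff y).
  apply/funext => N; rewrite /series /= big_mkord raddf_sum /=.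
  by apply: eq_bigr => k _; rewrite iy_term.
rewrite unlock; exact: is_cvg_series_sin_coeff.
Qed.

Lemma cexp_iy (R : realType) (y : R) : cexp ('i * y%:C) = ((cos y +i* sin y) : Cpx R).
Proof. rewrite /cexp; apply: cvg_lim; first exact: norm_hausdorff.
exact: cvg_cexp_iy. Qed.

Lemma cdivR_Re (R : realType) (w : Cpx R) (h : R) :
  cRe (w / h%:C) = cRe w / h.
Proof.
rewrite -fmorphV; case: w => a b; rewrite /=.
by rewrite !mulr0 subr0.
Qed.

Lemma cdivR_Im (R : realType) (w : Cpx R) (h : R) :
  cIm (w / h%:C) = cIm w / h.
Proof.
rewrite -fmorphV; case: w => a b; rewrite /=.
by rewrite !mulr0 add0r mulrC.
Qed.

Lemma imul_real (R : realType) (mu a b : R) :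
  ('i * mu%:C * (a +i* b) : Cpx R) = (- (mu * b)) +i* (mu * a).
Proof.
apply/eqP; rewrite eq_complex /=; apply/andP; split; apply/eqP; ring.
Qed.

Lemma cexp_real (R : realType) (mu s : R) :
  cexp ('i * mu%:C * s%:C : Cpx R) = ((cos (mu * s) +i* sin (mu * s)) : Cpx R).
Proof. by rewrite -mulrA -rmorphM cexp_iy. Qed.

Lemma real_deriv_lim (R : realType) (f : R -> R) (t df : R) :
  is_derive t 1 f df ->
  (fun h : R => (f (t + h) - f t) / h) @ 0^' --> df.
Proof.
move=> H.
have hc := @ex_derive _ _ _ _ _ _ _ H.
have e : 'D_1 f t = df by apply: derive_val.
have hc' : (fun h : R => h^-1 *: ((f \o shift t) (h *: 1) - f t)) @ 0^' --> df.
  by rewrite -e; exact: hc.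
apply: cvg_trans hc'; apply: near_eq_cvg; near=> h.
by rewrite /= -[h%:A]/(h * 1) mulr1 -[h^-1 *: _]/(h^-1 * _) [h + t]addrC mulrC.
Unshelve. all: end_near. Qed.

Lemma is_derive_scal (R : realType) (mu t : R) : is_derive t 1 (fun s : R => mu * s) mu.
Proof.
have H := is_deriveZ mu (is_derive_id t (1:R)).
have -> : (fun s : R => mu * s) = mu \*: id by apply/funext => s.
by apply: is_derive_eq H _; rewrite -[mu *: 1]/(mu * 1) mulr1.
Qed.

Lemma is_derive_cos_scal (R : realType) (mu t : R) :
  is_derive t 1 (fun s : R => cos (mu * s)) (- (mu * sin (mu * t))).
Proof.
have H := is_derive1_comp (@is_derive_cos R (mu * t)) (is_derive_scal _ mu t).
by apply: is_derive_eq H _; rewrite mulNr mulrC.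
Qed.

Lemma is_derive_sin_scal (R : realType) (mu t : R) :
  is_derive t 1 (fun s : R => sin (mu * s)) (mu * cos (mu * t)).
Proof.
have H := is_derive1_comp (@is_derive_sin R (mu * t)) (is_derive_scal _ mu t).
by apply: is_derive_eq H _; rewrite mulrC.
Qed.

Lemma cexp_deriv (R : realType) (mu t : R) :
  (fun h : R => (cexp ('i * mu%:C * (t + h)%:C) - cexp ('i * mu%:C * t%:C)) / h%:C)
     @ 0^' --> ('i * mu%:C * cexp ('i * mu%:C * t%:C) : Cpx R).
Proof.
apply: cvgC_ReIm.
  have -> : (fun h : R => cRe ((cexp ('i * mu%:C * (t + h)%:C) - cexp ('i * mu%:C * t%:C)) / h%:C))
     = (fun h => (cos (mu * (t + h)) - cos (mu * t)) / h).
    by apply/funext => h; rewrite cdivR_Re !cexp_real raddfB.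
  rewrite cexp_real imul_real /=.
  exact: (real_deriv_lim _ _ _ _ (is_derive_cos_scal _ mu t)).
have -> : (fun h : R => cIm ((cexp ('i * mu%:C * (t + h)%:C) - cexp ('i * mu%:C * t%:C)) / h%:C))
   = (fun h => (sin (mu * (t + h)) - sin (mu * t)) / h).
  by apply/funext => h; rewrite cdivR_Im !cexp_real raddfB.
rewrite cexp_real imul_real /=.
exact: (real_deriv_lim _ _ _ _ (is_derive_sin_scal _ mu t)).
Qed.

Definition Gf (R : realType) (mu : 'I_5 -> R) (a : 'I_5 -> Cpx R) (t : R) : Cpx R :=
  \sum_(k < 5) cexp ('i * (mu k)%:C * t%:C) * a k.
Arguments Gf {R}.

Lemma cderiv_G (R : realType) (mu : 'I_5 -> R) (a : 'I_5 -> Cpx R) :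
  cderiv (Gf mu a) = Gf mu (fun k => a k * ('i * (mu k)%:C)).
Proof.
apply/funext => t; rewrite /cderiv.
apply: cvg_lim; first exact: norm_hausdorff.
have -> : (fun h : R => (Gf mu a (t + h) - Gf mu a t) / h%:C) =
  (fun h : R => \sum_(k < 5) ((cexp ('i * (mu k)%:C * (t + h)%:C)
         - cexp ('i * (mu k)%:C * t%:C)) / h%:C) * a k).
  apply/funext => h; rewrite /Gf -sumrB big_distrl /=.
  by apply: eq_bigr => k _; rewrite -mulrBl mulrAC.
have -> : Gf mu (fun k => a k * ('i * (mu k)%:C)) t =
   \sum_(k < 5) ('i * (mu k)%:C * cexp ('i * (mu k)%:C * t%:C)) * a k.
  by rewrite /Gf; apply: eq_bigr => k _; ring.
apply: cvg_big => //; first exact: add_continuous.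
move=> k _; apply: cvgMl; exact: cexp_deriv.
Qed.

Lemma cderivn_G (R : realType) (mu : 'I_5 -> R) (a : 'I_5 -> Cpx R) n :
  cderivn n (Gf mu a) = Gf mu (fun k => a k * ('i * (mu k)%:C) ^+ n).
Proof.
elim: n => [|n IH].
  by rewrite /cderivn /=; congr Gf; apply/funext => k; rewrite expr0 mulr1.
rewrite /cderivn iterS.
change (cderiv (cderivn n (Gf mu a)) = Gf mu (fun k => a k * ('i * (mu k)%:C) ^+ n.+1)).
rewrite IH cderiv_G; congr (Gf mu _); apply/funext => k.
by rewrite exprSr; ring.
Qed.

Lemma expm_spec (R : realType) (H : 'M[Cpx R]_5) (mu : 'I_5 -> R)
  (P : 'I_5 -> 'M[Cpx R]_5) (t : R) :
  (forall m, H ^+ m = \sum_k ((mu k)%:C)^+m *: P k) ->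
  expm (('i * t%:C) *: H) = \sum_k cexp ('i * (mu k)%:C * t%:C) *: P k.
Proof.
move=> hH; apply/matrixP => a b; rewrite mxE summxE.
apply: cvg_lim; first exact: norm_hausdorff.
have -> : (fun N : nat => (\sum_(n < N) (n`!%:R)^-1 *: (('i * t%:C) *: H) ^+ n) a b)
  = (fun N => \sum_k (\sum_(n < N) (n`!%:R : Cpx R)^-1 * ('i * (mu k * t)%:C)^+n) * P k a b).
  apply/funext => N; rewrite summxE.
  transitivity (\sum_(n < N) \sum_k (n`!%:R : Cpx R)^-1 * ('i * (mu k * t)%:C)^+n * P k a b).
    apply: eq_bigr => n _; rewrite exprZn hH !mxE summxE big_distrr /= big_distrr /=.
    apply: eq_bigr => k _; rewrite !mxE rmorphM /= !exprMn; ring.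
  by rewrite exchange_big /=; apply: eq_bigr => k _; rewrite big_distrl.
apply: cvg_big => //; first exact: add_continuous.
move=> k _; rewrite mxE cexp_real; apply: cvgMl.
exact: cvg_cexp_iy.
Qed.

Definition o5 (i : nat) (h : (i < 5)%N) : 'I_5 := Ordinal h.

Lemma sum5 (V : comNzRingType) (F : 'I_5 -> V) :
  \sum_(i < 5) F i = F (@o5 0 isT) + F (@o5 1 isT) + F (@o5 2 isT) + F (@o5 3 isT) + F (@o5 4 isT).
Proof.
rewrite !big_ord_recr big_ord0 /= GRing.add0r.
by congr (_ + _ + _ + _ + _); apply: f_equal; apply: val_inj.
Qed.

Lemma prod5 (K : comNzRingType) (F : 'I_5 -> K) :
  \prod_(i < 5) F i = F (@o5 0 isT) * F (@o5 1 isT) * F (@o5 2 isT) * F (@o5 3 isT) * F (@o5 4 isT).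
Proof.
rewrite !big_ord_recr big_ord0 /= mul1r.
by congr (_ * _ * _ * _ * _); apply: f_equal; apply: val_inj.
Qed.

Definition Qf (K : numFieldType) (p2 p3 p4 y x : K) : K :=
  x ^+ 4 + y * x ^+ 3 + (y ^+ 2 - p2 / 2%:R) * x ^+ 2
  + (y ^+ 3 - p2 / 2%:R * y - p3 / 3%:R) * x
  + (p2 ^+ 2 / 8%:R - p4 / 4%:R - p3 / 3%:R * y - p2 / 2%:R * y ^+ 2 + y ^+ 4).
Arguments Qf {K}.

Lemma Qf_claim1 (K : numFieldType) (l : 'I_5 -> K) (x y : K) :
  \sum_(i < 5) l i = 0 ->
  Qf (\sum_(i < 5) l i ^+ 2) (\sum_(i < 5) l i ^+ 3) (\sum_(i < 5) l i ^+ 4) y x * (x - y)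
  = \prod_(i < 5) (x - l i) - \prod_(i < 5) (y - l i).
Proof.
rewrite !sum5 !prod5 /Qf => h.
have -> : l (@o5 4 isT) = - (l (@o5 0 isT) + l (@o5 1 isT) + l (@o5 2 isT) + l (@o5 3 isT)).
  by apply/eqP; rewrite -subr_eq0 opprK addrC; apply/eqP.
by field.
Qed.

Lemma Qf_diag (K : numFieldType) (l : 'I_5 -> K) (k : 'I_5) :
  \sum_(i < 5) l i = 0 ->
  Qf (\sum_(i < 5) l i ^+ 2) (\sum_(i < 5) l i ^+ 3) (\sum_(i < 5) l i ^+ 4) (l k) (l k)
  = \prod_(i < 5 | i != k) (l k - l i).
Proof.
rewrite !sum5 /Qf big_mkcond prod5 => h.
have e4 : l (@o5 4 isT) = - (l (@o5 0 isT) + l (@o5 1 isT) + l (@o5 2 isT) + l (@o5 3 isT)).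
  by apply/eqP; rewrite -subr_eq0 opprK addrC; apply/eqP.
case: k => [[|[|[|[|[|//]]]]] hk] /=.
- have -> : Ordinal hk = o5 0 isT by apply: val_inj.
  rewrite /= mul1r. rewrite e4. by field.
- have -> : Ordinal hk = o5 1 isT by apply: val_inj.
  rewrite /= mulr1. rewrite e4. by field.
- have -> : Ordinal hk = o5 2 isT by apply: val_inj.
  rewrite /= mulr1. rewrite e4. by field.
- have -> : Ordinal hk = o5 3 isT by apply: val_inj.
  rewrite /= mulr1. rewrite e4. by field.
- have -> : Ordinal hk = o5 4 isT by apply: val_inj.
  rewrite /= mulr1. rewrite e4. by field.
Qed.

Lemma prod_root (K : numFieldType) (l : 'I_5 -> K) (k : 'I_5) :
  \prod_(i < 5) (l k - l i) = 0.
Proof. by rewrite (bigD1 k) //= subrr mul0r. Qed.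

Lemma Qf_sum (K : numFieldType) (l x : 'I_5 -> K) (k : 'I_5) :
  injective l -> \sum_(i < 5) l i = 0 ->
  \sum_(j < 5) x j * Qf (\sum_(i < 5) l i ^+ 2) (\sum_(i < 5) l i ^+ 3)
        (\sum_(i < 5) l i ^+ 4) (l j) (l k)
  = x k * \prod_(i < 5 | i != k) (l k - l i).
Proof.
move=> linj h0.
rewrite [LHS](bigD1 k) //= Qf_diag // [X in _ + X]big1 ?addr0 // => j hj.
have hne : l k - l j != 0.
  by rewrite subr_eq0; apply/eqP => /linj ekj; rewrite ekj eqxx in hj.
have := @Qf_claim1 K l (l k) (l j) h0.
rewrite !prod_root subrr => /eqP; rewrite mulf_eq0 (negbTE hne) orbF => /eqP ->.
by rewrite mulr0.
Qed.

Lemma via_ii (K : numFieldType) (ii a b c : K) :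
  ii * ii = -1 -> a - b = (ii * ii + 1) * c -> a = b.
Proof. by move=> hii; rewrite hii addNr mul0r => /eqP; rewrite subr_eq0 => /eqP. Qed.

Lemma coef_id (K : numFieldType) (ii : K) (l x : 'I_5 -> K) (lk : K) :
  ii * ii = -1 ->
  let D m := \sum_(j < 5) x j * (ii * l j) ^+ m in
  let p2 := \sum_(i < 5) l i ^+ 2 in
  let p3 := \sum_(i < 5) l i ^+ 3 in
  let p4 := \sum_(i < 5) l i ^+ 4 in
  D 0%N * lk ^+ 4 - (ii * D 1%N) * lk ^+ 3 - (p2 / 2%:R * D 0%N + D 2%N) * lk ^+ 2
  + (- (p3 / 3%:R) * D 0%N + 2%:R^-1 * ii * p2 * D 1%N + ii * D 3%N) * lk
  + (p2 ^+ 2 / 8%:R * D 0%N - p4 / 4%:R * D 0%N + p3 / 3%:R * ii * D 1%N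
       + p2 / 2%:R * D 2%N + D 4%N)
  = \sum_(j < 5) x j * Qf p2 p3 p4 (l j) lk.
Proof.
move=> hii D p2 p3 p4.
pose A m := \sum_(j < 5) x j * l j ^+ m.
have hD0 : D 0%N = A 0%N by apply: eq_bigr => j _; rewrite !expr0.
have hD1 : ii * D 1%N = - A 1%N.
  rewrite /D /A big_distrr -sumrN; apply: eq_bigr => j _.
  by apply: (@via_ii K ii _ _ (x j * l j) hii); rewrite /=; ring.
have hD2 : D 2%N = - A 2%N.
  rewrite /D /A -sumrN; apply: eq_bigr => j _.
  by apply: (@via_ii K ii _ _ (x j * l j ^+ 2) hii); ring.
have hD3 : ii * D 3%N = A 3%N.
  rewrite /D /A big_distrr; apply: eq_bigr => j _.
  by apply: (@via_ii K ii _ _ ((ii * ii - 1) * (x j * l j ^+ 3)) hii); rewrite /=; ring.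
have hD4 : D 4%N = A 4%N.
  rewrite /D /A; apply: eq_bigr => j _.
  by apply: (@via_ii K ii _ _ ((ii * ii - 1) * (x j * l j ^+ 4)) hii); ring.
rewrite (_ : 2%:R^-1 * ii * p2 * D 1%N = 2%:R^-1 * p2 * (ii * D 1%N)); last by ring.
rewrite (_ : p3 / 3%:R * ii * D 1%N = p3 / 3%:R * (ii * D 1%N)); last by ring.
rewrite hD1 hD3 hD2 hD4 hD0 /A /Qf.
rewrite !sum5.
by field.
Qed.

Lemma row_prod_eig (F : fieldType) (n : nat) (H : 'M[F]_n.+1) (v : 'rV_n.+1) (a : F)
  (I : Type) (r : seq I) (P : pred I) (c : I -> F) :
  v *m H = a *: v ->
  v *m (\prod_(i <- r | P i) (H - (c i)%:M)) = (\prod_(i <- r | P i) (a - c i)) *: v.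
Proof.
move=> hv; elim: r => [|i r IH]; first by rewrite !big_nil mulmx1 scale1r.
rewrite !big_cons; case: (P i) => //.
rewrite -mulmxE mulmxA mulmxBr hv mul_mx_scalar -scalerBl -scalemxAl IH.
by rewrite scalerA.
Qed.

Lemma eigvec_unit (F : fieldType) (H : 'M[F]_5) (lam : 'I_5 -> F) (v : 'I_5 -> 'rV_5) :
  injective lam -> (forall k, v k *m H = lam k *: v k) -> (forall k, v k != 0) ->
  (\matrix_k v k) \in unitmx.
Proof.
move=> linj hv hv0.
rewrite unitmxE unitfE; apply/negP => /det0P [u u0 hu].
apply/negP: u0; rewrite negbK; apply/eqP/rowP => j; rewrite mxE.
set Pj := \prod_(i < 5 | i != j) (H - (lam i)%:M).
have := congr1 (mulmx^~ Pj) hu; rewrite mul0mx [u *m _]mulmx_sum_row mulmx_suml.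
rewrite (bigD1 j) //= big1 ?addr0; last first.
  move=> k hk; rewrite rowK -scalemxAl /Pj (@row_prod_eig _ _ _ _ _ _ _ _ _ (hv k)).
  rewrite (bigD1 k) /=; last by rewrite ?hk // eq_sym.
  by rewrite subrr mul0r scale0r scaler0.
rewrite (rowK v j) -scalemxAl /Pj (@row_prod_eig _ _ _ _ _ _ _ _ _ (hv j)).
rewrite scalerA => /eqP; rewrite scaler_eq0 (negbTE (hv0 j)) orbF mulf_eq0.
case/orP => [/eqP //|] /eqP hz; exfalso; move: hz; apply/eqP.
apply: (big_ind (fun x => x != 0)); [exact: oner_neq0| by move=> x y; apply: mulf_neq0|].
move=> i hij; rewrite subr_eq0; apply/negP => /eqP /linj eji.
by rewrite eji eqxx in hij.
Qed.

Lemma proj_sum (F : fieldType) (W : 'M[F]_5) :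
  W \in unitmx -> \sum_k col k (invmx W) *m row k W = 1%:M.
Proof.
move=> Wu; apply/matrixP => a b; rewrite summxE -(mulVmx Wu) [in RHS]mxE.
by apply: eq_bigr => k _; rewrite !mxE big_ord1 !mxE.
Qed.

Lemma proj_tr (F : fieldType) (W : 'M[F]_5) k :
  W \in unitmx -> \tr (col k (invmx W) *m row k W) = 1.
Proof.
move=> Wu; rewrite mxtrace_mulC /mxtrace big_ord1 !mxE.
transitivity ((W *m invmx W) k k); last by rewrite mulmxV // mxE eqxx.
by rewrite mxE; apply: eq_bigr => j _; rewrite !mxE.
Qed.

Lemma spectral (F : fieldType) (H : 'M[F]_5) (lam : 'I_5 -> F) (W : 'M[F]_5) :
  W \in unitmx -> (forall k, row k W *m H = lam k *: row k W) ->
  forall m, H ^+ m = \sum_k lam k ^+ m *: (col k (invmx W) *m row k W).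
Proof.
move=> Wu hW m.
have hPH k : (col k (invmx W) *m row k W) *m H ^+ m
    = lam k ^+ m *: (col k (invmx W) *m row k W).
  elim: m => [|m IH]; first by rewrite expr0 mulmx1 scale1r.
  rewrite exprSr -mulmxE mulmxA IH -scalemxAl -mulmxA hW scalemxAr scalerA.
  by apply/matrixP => a b; rewrite !mxE !big_ord1 !mxE exprSr; ring.
rewrite -[H ^+ m]mul1mx -(@proj_sum F W Wu) mulmx_suml; apply: eq_bigr => k _.
exact: hPH.
Qed.

Lemma tr_pow (F : fieldType) (H : 'M[F]_5) (lam : 'I_5 -> F) (W : 'M[F]_5) :
  W \in unitmx -> (forall k, row k W *m H = lam k *: row k W) ->
  forall m, \tr (H ^+ m) = \sum_k lam k ^+ m.
Proof.
move=> Wu hW m; rewrite (@spectral F H lam W Wu hW) raddf_sum /=; apply: eq_bigr => k _.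
by rewrite mxtraceZ (@proj_tr F W k Wu) mulr1.
Qed.

Lemma combo (F : fieldType) (H : 'M[F]_5) (lam : 'I_5 -> F) (P : 'I_5 -> 'M[F]_5)
  (c4 c3 c2 c1 c0 : F) :
  (forall m, H ^+ m = \sum_k lam k ^+ m *: P k) ->
  c4 *: H ^+ 4 - c3 *: H ^+ 3 - c2 *: H ^+ 2 + c1 *: H + c0 *: (1%:M : 'M[F]_5)
   = \sum_k (c4 * lam k ^+ 4 - c3 * lam k ^+ 3 - c2 * lam k ^+ 2 + c1 * lam k + c0) *: P k.
Proof.
move=> hH.
have h0 : (1%:M : 'M[F]_5) = H ^+ 0 by rewrite expr0.
rewrite h0 -[c1 *: H]/(c1 *: H ^+ 1) !hH !scaler_sumr.
rewrite -sumrB -sumrB -big_split -big_split /=; apply: eq_bigr => k _.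
by rewrite !scalerA !(scalerDl, scalerBl) expr0 expr1 mulr1 !scaleNr.
Qed.

Lemma deriv_prod_root (F : fieldType) (l : 'I_5 -> F) (k : 'I_5) :
  (\prod_(i < 5) ('X - (l i)%:P))^`().[l k] = \prod_(i < 5 | i != k) (l k - l i).
Proof.
rewrite (bigD1 k) //= derivM derivXsubC mul1r hornerD hornerM hornerXsubC subrr mul0r addr0.
rewrite horner_prod; apply: eq_bigr => i _; exact: hornerXsubC.
Qed.

Lemma prod_ne0 (F : fieldType) (lam : 'I_5 -> F) (k : 'I_5) :
  injective lam -> \prod_(i < 5 | i != k) (lam k - lam i) != 0.
Proof.
move=> linj.
apply: (big_ind (fun x => x != 0)); [exact: oner_neq0| by move=> x y; apply: mulf_neq0|].
move=> i hij; rewrite subr_eq0; apply/negP => /eqP /linj eji.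
by rewrite eji eqxx in hij.
Qed.

Lemma herm_real (R : rcfType) (H : 'M[R[i]]_5) (v : 'rV_5) (a : R[i]) :
  (forall x y, H y x = conjc (H x y)) -> v *m H = a *: v -> v != 0 -> conjc a = a.
Proof.
move=> hH hv v0.
pose N := \sum_b v 0 b * conjc (v 0 b).
pose S := \sum_b \sum_c v 0 c * H c b * conjc (v 0 b).
have hS : S = a * N.
  rewrite /S /N big_distrr; apply: eq_bigr => b _.
  have := congr1 (fun M : 'rV_5 => M 0 b) hv; rewrite !mxE => e.
  by rewrite -big_distrl /= e mulrA.
have hSc : conjc S = S.
  rewrite /S rmorph_sum; under eq_bigr do rewrite rmorph_sum.
  rewrite exchange_big; apply: eq_bigr => b _; apply: eq_bigr => c _.
  by rewrite !rmorphM /= conjcK -hH; ring.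
have hNc : conjc N = N.
  by rewrite /N rmorph_sum; apply: eq_bigr => b _; rewrite rmorphM /= conjcK mulrC.
have N0 : N != 0.
  apply: contra v0 => /eqP hN; apply/eqP/rowP => b; rewrite mxE.
  have := @psumr_eq0P _ _ xpredT (fun b => v 0 b * conjc (v 0 b)) (fun b _ => mulcJ_ge0 _) hN b isT.
  by move/eqP; rewrite mulf_eq0 conjc_eq0 orbb => /eqP.
have : conjc a * N = a * N by rewrite -{1}hNc -rmorphM /= -hS hSc.
by move/mulIf; apply.
Qed.

Theorem mainTheorem3 (R : realType) (H : 'M[Cpx R]_5) (lam : 'I_5 -> Cpx R)
  (hH : hermitian_mx H) (htr : \tr H = 0)
  (hinj : injective lam) (heig : forall k, eigenvalue H (lam k)) (t : R) :
  let F := F5 lam in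
  let D (n : nat) := cderivn n F t in
  let tr2 := \tr (H ^+ 2) in
  let tr3 := \tr (H ^+ 3) in
  let tr4 := \tr (H ^+ 4) in
  expm (('i * (t%:C : Cpx R)) *: H) =
      D 0 *: H ^+ 4
    - ('i * D 1) *: H ^+ 3
    - (tr2 / 2%:R * D 0 + D 2) *: H ^+ 2
    + (- (tr3 / 3%:R) * D 0 + 2%:R^-1 * 'i * tr2 * D 1 + 'i * D 3) *: H
    + (tr2 ^+ 2 / 8%:R * D 0 - tr4 / 4%:R * D 0 + tr3 / 3%:R * 'i * D 1
       + tr2 / 2%:R * D 2 + D 4) *: (1%:M : 'M[Cpx R]_5).
Proof.
move=> F D tr2 tr3 tr4.
have [v hv] : exists v : 'I_5 -> 'rV[Cpx R]_5, forall k, v k *m H = lam k *: v k /\ v k != 0.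
  apply: (@fin_all_exists _ (fun _ => 'rV[Cpx R]_5) (fun k w => w *m H = lam k *: w /\ w != 0)) => k.
  by have /eigenvalueP [w hw w0] := heig k; exists w.
have hv1 k : v k *m H = lam k *: v k := (hv k).1.
have hv0 k : v k != 0 := (hv k).2.
have hreal k : lam k = (cRe (lam k))%:C.
  have hc : conjc (lam k) = lam k := @herm_real R H (v k) (lam k) hH (hv1 k) (hv0 k).
  move: hc; case: (lam k) => a b /= [hb].
  have b0 : b = 0.
    have : b *+ 2 = 0 by rewrite mulr2n -{1}hb addNr.
    by move/eqP; rewrite mulrn_eq0 /= => /eqP.
  by rewrite b0.
pose W := \matrix_k v k.
have Wu : W \in unitmx := @eigvec_unit _ H lam v hinj hv1 hv0.
have hW k : row k W *m H = lam k *: row k W by rewrite rowK.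
have hspec := @spectral _ H lam W Wu hW.
have htrp := @tr_pow _ H lam W Wu hW.
have hsum0 : \sum_(i < 5) lam i = 0.
  transitivity (\sum_(k < 5) lam k ^+ 1); first by apply: eq_bigr => i _; rewrite expr1.
  by rewrite -htrp expr1.
pose P k := col k (invmx W) *m row k W.
have hspec' : forall m, H ^+ m = \sum_k ((cRe (lam k))%:C)^+m *: P k.
  by move=> m; rewrite hspec; apply: eq_bigr => k _; rewrite -hreal.
rewrite (@expm_spec R H (fun k => cRe (lam k)) P t hspec').
rewrite (@combo _ H lam P _ _ _ _ _ hspec).
apply: eq_bigr => k _; congr (_ *: _); apply/esym.
pose d j := ((charC lam)^`()).[lam j].
have hF : F = Gf (fun j => cRe (lam j)) (fun j => (d j)^-1).
  by apply/funext => s; rewrite /F /F5 /Gf; apply: eq_bigr => j _; rewrite -hreal.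
have hDm m : D m = \sum_(j < 5) (cexp ('i * lam j * t%:C) * (d j)^-1) * ('i * lam j) ^+ m.
  by rewrite /D hF cderivn_G /Gf; apply: eq_bigr => j _; rewrite -hreal mulrA.
have e2 : tr2 = \sum_(i < 5) lam i ^+ 2 := htrp 2%N.
have e3 : tr3 = \sum_(i < 5) lam i ^+ 3 := htrp 3%N.
have e4 : tr4 = \sum_(i < 5) lam i ^+ 4 := htrp 4%N.
rewrite e2 e3 e4 !hDm.
have hii : ('i : Cpx R) * 'i = -1 by rewrite -expr2 sqr_i.
have hc := @coef_id _ 'i lam (fun j => cexp ('i * lam j * t%:C) * (d j)^-1) (lam k) hii.
cbv beta zeta in hc; rewrite hc.
have hq := @Qf_sum _ lam (fun j => cexp ('i * lam j * t%:C) * (d j)^-1) k hinj hsum0.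
cbv beta in hq; rewrite hq.
have hd : d k = \prod_(i < 5 | i != k) (lam k - lam i) by rewrite /d /charC deriv_prod_root.
rewrite -hd mulfVK; last by rewrite hd prod_ne0.
by rewrite -hreal.
Qed.
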